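(* For all $s\in\mathbb{C}$ with $\Re(s)>1$, \[\sum_{n=1}^{\infty}\frac{1}{n^{s}}\cdot\frac{1}{\omega(n)+1}\Big[\sum_{p\ \text{prime}}\frac{1}{p^{s}}+\frac{1}{\omega(n)}\sum_{p\mid n}\frac{1}{p^{s}}\Big]=\zeta(s)-1,\] with the convention that for $n=1$ the term $\frac{1}{\omega(n)}\sum_{p\mid n}p^{-s}$ (an empty sum) is $0$.
   Context: $\omega(n)$ is the number of distinct prime divisors of $n$; the sum $\sum_{p\mid n}$ runs over the primes dividing $n$; $\zeta(s)=\sum_{n\ge1}n^{-s}$. *)

(* Defs.v *)
From Stdlib Require Import Reals ZArith Znumtheory List Arith.
Open Scope R_scope.

Record Cplx := mkC { Re : R; Im : R }.

Definition Cadd (z w : Cplx) : Cplx := mkC (Re z + Re w) (Im z + Im w).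
Definition Csub (z w : Cplx) : Cplx := mkC (Re z - Re w) (Im z - Im w).
Definition Cmul (z w : Cplx) : Cplx :=
  mkC (Re z * Re w - Im z * Im w) (Re z * Im w + Im z * Re w).
Definition RC (x : R) : Cplx := mkC x 0.
Definition Czero : Cplx := RC 0.
Definition Cone : Cplx := RC 1.

Definition Cexp (z : Cplx) : Cplx := mkC (exp (Re z) * cos (Im z)) (exp (Re z) * sin (Im z)).

Definition npow_neg (n : nat) (s : Cplx) : Cplx :=
  Cexp (Cmul (RC (- ln (INR n))) s).

Definition Cseries_cv (f : nat -> Cplx) (l : Cplx) : Prop :=
  infinite_sum (fun k => Re (f k)) (Re l) /\ infinite_sum (fun k => Im (f k)) (Im l).

Definition primeb (p : nat) : bool :=
  if prime_dec (Z.of_nat p) then true else false.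

Definition prime_divisors (n : nat) : list nat :=
  filter (fun p => andb (primeb p) (Nat.eqb (Nat.modulo n p) 0)) (seq 1 n).

Definition omega (n : nat) : nat := length (prime_divisors n).

Definition sum_pdiv (n : nat) (s : Cplx) : Cplx :=
  fold_right (fun p acc => Cadd (npow_neg p s) acc) Czero (prime_divisors n).

(* zeta series: sum_{n>=1} n^{-s}, indexed from k = 0 with n = k+1 *)
Definition zeta_term (s : Cplx) (k : nat) : Cplx := npow_neg (S k) s.

Definition prime_term (s : Cplx) (k : nat) : Cplx :=
  if primeb k then npow_neg k s else Czero.

(* (1/omega(n)) * sum_{p|n} p^{-s}, with value 0 when omega(n) = 0 (n = 1) *)
Definition avg_pdiv (n : nat) (s : Cplx) : Cplx :=
  match omega n with
  | O => Czero
  | w => Cmul (RC (/ INR w)) (sum_pdiv n s)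
  end.

(* n-th summand of the main series, given the value P of sum_p p^{-s} *)
Definition main_term (s P : Cplx) (n : nat) : Cplx :=
  Cmul (npow_neg n s)
    (Cmul (RC (/ (INR (omega n) + 1))) (Cadd P (avg_pdiv n s))).

(* Main.v *)
Require Import Defs.
From Stdlib Require Import Reals.
Open Scope R_scope.

From Stdlib Require Import ZArith Znumtheory List Arith Lia Lra Permutation.
Require Import Defs.
Open Scope R_scope.


Definition ind (b : bool) : R := if b then 1 else 0.
Lemma ind_01 b : 0 <= ind b <= 1.
Proof. destruct b; simpl; lra. Qed.

Fixpoint rs (f : nat -> R) (n : nat) : R :=
  match n with O => 0 | S k => rs f k + f k end.

Lemma rs_ext f g n : (forall k, (k < n)%nat -> f k = g k) -> rs f n = rs g n.
Proof. induction n; simpl; intros H; [reflexivity|]. rewrite IHn by (intros; apply H; lia). rewrite H by lia. reflexivity. Qed.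
Lemma rs_plus f g n : rs (fun k => f k + g k) n = rs f n + rs g n.
Proof. induction n; simpl; [ring|]. rewrite IHn; ring. Qed.
Lemma rs_minus f g n : rs (fun k => f k - g k) n = rs f n - rs g n.
Proof. induction n; simpl; [ring|]. rewrite IHn; ring. Qed.
Lemma rs_scal c f n : rs (fun k => c * f k) n = c * rs f n.
Proof. induction n; simpl; [ring|]. rewrite IHn; ring. Qed.
Lemma rs_zero n : rs (fun _ => 0) n = 0.
Proof. induction n; simpl; [ring|]. rewrite IHn; ring. Qed.
Lemma rs_le f g n : (forall k, (k < n)%nat -> f k <= g k) -> rs f n <= rs g n.
Proof. induction n; simpl; intros H; [lra|]. assert (H1:= H n ltac:(lia)). assert (rs f n <= rs g n) by (apply IHn; intros; apply H; lia). lra. Qed.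
Lemma rs_abs f n : Rabs (rs f n) <= rs (fun k => Rabs (f k)) n.
Proof. induction n; simpl. rewrite Rabs_R0; lra. eapply Rle_trans. apply Rabs_triang. lra. Qed.
Lemma rs_nonneg f n : (forall k, 0 <= f k) -> 0 <= rs f n.
Proof. intros H. induction n; simpl; [lra|]. specialize (H n); lra. Qed.
Lemma rs_mono f n m : (forall k, 0 <= f k) -> (n <= m)%nat -> rs f n <= rs f m.
Proof. intros H Hnm. induction Hnm; [lra|]. simpl. specialize (H m); lra. Qed.
Lemma rs_exch f n m : rs (fun i => rs (fun j => f i j) m) n = rs (fun j => rs (fun i => f i j) n) m.
Proof. induction n; simpl. rewrite rs_zero; reflexivity. rewrite IHn, <- rs_plus. reflexivity. Qed.
Lemma rs_single g k M : rs (fun m => ind (Nat.eqb k m) * g m) M = ind (Nat.ltb k M) * g k.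
Proof.
  induction M; simpl. unfold ind; simpl. ring. rewrite IHM.
  destruct (Nat.eqb_spec k M); destruct (Nat.ltb_spec k M); destruct (Nat.ltb_spec k (S M)); unfold ind; subst; try lia; ring.
Qed.
Lemma sum_f_rs f n : sum_f_R0 f n = rs f (S n).
Proof. induction n; simpl. ring. rewrite IHn. simpl. ring. Qed.
Lemma rs_shift f n : rs f (S n) = f O + rs (fun k => f (S k)) n.
Proof. induction n. simpl; ring. simpl in *. rewrite IHn. ring. Qed.
Lemma rs_mult f g n m : rs (fun i => rs (fun j => f i * g j) m) n = rs f n * rs g m.
Proof. induction n; simpl. ring. rewrite IHn, rs_scal. ring. Qed.

Lemma rs_filter f g n : rs (fun k => ind (f k) * g k) n = fold_right Rplus 0 (map g (filter f (seq 0 n))).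
Proof.
  induction n; [reflexivity|]. cbn [rs]. rewrite seq_S, filter_app, map_app.
  assert (forall l1 l2, fold_right Rplus 0 (l1 ++ l2) = fold_right Rplus 0 l1 + fold_right Rplus 0 l2) as Hf.
  { induction l1; simpl; intros; [ring|]. rewrite IHl1; ring. }
  rewrite Hf, IHn. simpl. unfold ind. destruct (f n); simpl; ring.
Qed.
Lemma filter_false (f : nat -> bool) l : (forall x, In x l -> f x = false) -> filter f l = nil.
Proof. induction l; simpl; intros H; [reflexivity|]. rewrite H by auto. apply IHl; auto. Qed.
Lemma filter_seq0 (f : nat -> bool) m K : f O = false -> (forall k, (m < k)%nat -> f k = false) -> (m < K)%nat ->
  filter f (seq 0 K) = filter f (seq 1 m).
Proof.
  intros H0 Hk HK. replace K with (S m + (K - S m))%nat by lia. rewrite seq_app, filter_app.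
  rewrite (filter_false f (seq (0 + S m) _)). rewrite app_nil_r. simpl. rewrite H0. reflexivity.
  intros x Hx. apply in_seq in Hx. apply Hk; lia.
Qed.



Lemma primeb_spec p : primeb p = true <-> prime (Z.of_nat p).
Proof. unfold primeb. destruct (prime_dec (Z.of_nat p)); split; intros; auto; discriminate. Qed.
Lemma primeb_ge2 p : primeb p = true -> (2 <= p)%nat.
Proof. intros H. apply primeb_spec, prime_ge_2 in H. lia. Qed.

Lemma mod0_Z (n q : nat) : q <> O -> (((Nat.modulo n q) = 0)%nat <-> (Z.of_nat q | Z.of_nat n)%Z).
Proof.
  intros Hq. rewrite <- Z.mod_divide by lia. rewrite <- Nat2Z.inj_mod. lia.
Qed.

Definition pd (n p : nat) : bool := andb (primeb p) (Nat.eqb (Nat.modulo n p) 0).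

Lemma in_pdl (n q : nat) : (1 <= n)%nat -> (In q (prime_divisors n) <-> (primeb q = true /\ ((Nat.modulo n q) = 0)%nat)).
Proof.
  intros Hn. unfold prime_divisors. rewrite filter_In, in_seq, Bool.andb_true_iff, Nat.eqb_eq.
  split. tauto. intros [H1 H2]. split; [|tauto]. pose proof (primeb_ge2 _ H1).
  destruct (Nat.le_gt_cases q n). lia. rewrite Nat.mod_small in H2 by lia. lia.
Qed.

Lemma pdl_nodup n : NoDup (prime_divisors n).
Proof. apply NoDup_filter, seq_NoDup. Qed.

Lemma prime_div_prod (p q n : nat) : primeb p = true -> primeb q = true ->
  (((Nat.modulo (p * n) q) = 0)%nat <-> (((Nat.modulo n q) = 0)%nat \/ q = p)).
Proof.
  intros Hp Hq. pose proof (primeb_ge2 _ Hp). pose proof (primeb_ge2 _ Hq).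
  apply primeb_spec in Hp. apply primeb_spec in Hq.
  rewrite !mod0_Z by lia. rewrite Nat2Z.inj_mul. split.
  - intros Hd. destruct (prime_mult _ Hq _ _ Hd) as [H1|H1]; [right|left; auto].
    apply prime_div_prime in H1; auto. lia.
  - intros [H1|H1]. apply Z.divide_mul_r; auto. subst. apply Z.divide_mul_l, Z.divide_refl.
Qed.

Lemma omega_same m p : (1 <= m)%nat -> pd m p = true -> ((Nat.modulo (m / p) p) = 0)%nat -> omega (m / p) = omega m.
Proof.
  intros Hm Hpd Hdiv. unfold pd in Hpd. apply Bool.andb_true_iff in Hpd as [Hp Hmod]. apply Nat.eqb_eq in Hmod.
  pose proof (primeb_ge2 _ Hp).
  assert (Hmp : m = (p * (m / p))%nat) by (pose proof (Nat.div_mod_eq m p); lia).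
  assert (1 <= m / p)%nat by (destruct (m / p)%nat; lia).
  unfold omega. apply Permutation_length, NoDup_Permutation; try apply pdl_nodup.
  intros q. rewrite !in_pdl by lia. split; intros [Hq Hqd]; split; auto.
  - rewrite Hmp. apply prime_div_prod; auto.
  - rewrite Hmp in Hqd. apply prime_div_prod in Hqd; auto. destruct Hqd; subst; auto.
Qed.

Lemma omega_less m p : (1 <= m)%nat -> pd m p = true -> ((Nat.modulo (m / p) p) <> 0)%nat -> S (omega (m / p)) = omega m.
Proof.
  intros Hm Hpd Hdiv. unfold pd in Hpd. apply Bool.andb_true_iff in Hpd as [Hp Hmod]. apply Nat.eqb_eq in Hmod.
  pose proof (primeb_ge2 _ Hp).
  assert (Hmp : m = (p * (m / p))%nat) by (pose proof (Nat.div_mod_eq m p); lia).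
  assert (1 <= m / p)%nat by (destruct (m / p)%nat; lia).
  unfold omega. change (S (length (prime_divisors (m / p)))) with (length (p :: prime_divisors (m / p))).
  apply Permutation_length, NoDup_Permutation.
  - constructor. rewrite in_pdl by lia. tauto. apply pdl_nodup.
  - apply pdl_nodup.
  - intros q. simpl. rewrite !in_pdl by lia. split.
    + intros [<-|[Hq Hqd]]. split; auto. split; auto. rewrite Hmp. apply prime_div_prod; auto.
    + intros [Hq Hqd]. rewrite Hmp in Hqd. apply prime_div_prod in Hqd; auto. destruct Hqd; auto.
Qed.

Lemma exists_prime_div m : (2 <= m)%nat -> exists q, primeb q = true /\ ((Nat.modulo m q) = 0)%nat.
Proof.
  induction m as [m IH] using (well_founded_induction lt_wf). intros Hm.
  destruct (prime_dec (Z.of_nat m)) as [Hpr|Hnp].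
  - exists m. split. apply primeb_spec; auto. apply Nat.mod_same; lia.
  - destruct (not_prime_divide (Z.of_nat m) ltac:(lia) Hnp) as [d [Hd Hdd]].
    destruct (IH (Z.to_nat d) ltac:(lia) ltac:(lia)) as [q [Hq Hqd]].
    exists q. split; auto. pose proof (primeb_ge2 _ Hq). apply mod0_Z in Hqd; [|lia]. apply mod0_Z; [lia|].
    rewrite Z2Nat.id in Hqd by lia. eapply Z.divide_trans; eauto.
Qed.

Lemma omega_pos m : (2 <= m)%nat -> (1 <= omega m)%nat.
Proof.
  intros Hm. destruct (exists_prime_div m Hm) as [q Hq]. unfold omega.
  assert (In q (prime_divisors m)) by (apply in_pdl; auto; lia).
  destruct (prime_divisors m); simpl in *; [contradiction|lia].
Qed.

Lemma omega_1 : omega 1 = O.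
Proof.
  unfold omega, prime_divisors. simpl. unfold primeb.
  destruct (prime_dec (Z.of_nat 1)) as [H|H]; simpl; auto; exfalso; apply not_prime_1; exact H.
Qed.

Lemma rs_pd_count m K : (1 <= m)%nat -> (m < K)%nat -> rs (fun p => ind (pd m p)) K = INR (omega m).
Proof.
  intros Hm HK. rewrite (rs_ext _ (fun p => ind (pd m p) * 1)) by (intros; ring).
  rewrite rs_filter. rewrite (filter_seq0 _ m) ; auto.
  - unfold omega. change (prime_divisors m) with (filter (pd m) (seq 1 m)).
    induction (filter (pd m) (seq 1 m)); simpl; auto.
    rewrite IHl. destruct (length l); simpl; try ring.
  - intros k Hk. unfold pd. rewrite Nat.mod_small by lia. destruct (primeb k); simpl; auto. apply Nat.eqb_neq; lia.
Qed.


Definition r1 (n : nat) : R := / (INR (omega n) + 1).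
Definition r2 (n : nat) : R := if Nat.eqb (omega n) 0 then 0 else r1 n * / INR (omega n).
Definition coef (n p : nat) : R := r1 n * ind (primeb p) + r2 n * ind (pd n p).

Lemma pd_primeb n p : pd n p = true -> primeb p = true.
Proof. unfold pd. intros H; apply Bool.andb_true_iff in H; tauto. Qed.

Lemma coef_term m p : (1 <= m)%nat -> pd m p = true -> coef (Nat.div m p) p = / INR (omega m).
Proof.
  intros Hm Hpd. pose proof (pd_primeb _ _ Hpd) as Hp. pose proof (primeb_ge2 _ Hp).
  assert (Hmod : Nat.modulo m p = O) by (unfold pd in Hpd; apply Bool.andb_true_iff in Hpd; apply Nat.eqb_eq; tauto).
  assert (Hmp : m = (p * (Nat.div m p))%nat) by (pose proof (Nat.div_mod_eq m p); lia).
  assert (Hw : (1 <= omega m)%nat) by (apply omega_pos; destruct (Nat.div m p) as [|k]; lia).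
  unfold coef, r1, r2. rewrite Hp. unfold pd at 1. rewrite Hp. simpl.
  destruct (Nat.eqb_spec (Nat.modulo (Nat.div m p) p) 0) as [E|E].
  - rewrite (omega_same m p) by auto. destruct (Nat.eqb_spec (omega m) 0); [lia|].
    unfold ind; simpl. assert (0 < INR (omega m)) by (apply lt_0_INR; lia). unfold r1. rewrite (omega_same m p) by auto. field. lra.
  - pose proof (omega_less m p Hm Hpd E) as Ho. rewrite <- Ho. rewrite S_INR. unfold ind; simpl.
    pose proof (pos_INR (omega (Nat.div m p))). field. lra.
Qed.

Lemma inner_p m K : (m < K)%nat ->
  rs (fun p => ind (pd m p) * ind (Nat.leb 1 (Nat.div m p)) * coef (Nat.div m p) p) K = ind (Nat.leb 2 m).
Proof.
  intros HK. destruct m as [|m].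
  - rewrite (rs_ext _ (fun _ => 0)). rewrite rs_zero. reflexivity.
    intros k _. rewrite Nat.Div0.div_0_l. unfold ind at 2. simpl. ring.
  - rewrite (rs_ext _ (fun p => / INR (omega (S m)) * ind (pd (S m) p))).
    + rewrite rs_scal, rs_pd_count by lia. destruct m as [|m].
      * rewrite omega_1. simpl. ring.
      * assert (Hw : (1 <= omega (S (S m)))%nat) by (apply omega_pos; lia).
        assert (0 < INR (omega (S (S m)))) by (apply lt_0_INR; lia). unfold ind; simpl. field. lra.
    + intros p _. destruct (pd (S m) p) eqn:Hpd.
      * rewrite coef_term by (auto; lia).
        pose proof (pd_primeb _ _ Hpd) as Hp. pose proof (primeb_ge2 _ Hp).
        assert (Hmod : Nat.modulo (S m) p = O) by (unfold pd in Hpd; apply Bool.andb_true_iff in Hpd; apply Nat.eqb_eq; tauto).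
        assert (Hmp : S m = (p * (Nat.div (S m) p))%nat) by (pose proof (Nat.div_mod_eq (S m) p); lia).
        destruct (Nat.leb_spec 1 (Nat.div (S m) p)); [|lia]. unfold ind; simpl. ring.
      * unfold ind; simpl. ring.
Qed.

Lemma inner_n N m p : (m <= N)%nat ->
  rs (fun n => ind (Nat.leb 1 n) * ind (Nat.eqb (n * p) m) * coef n p) (S N)
  = ind (pd m p) * ind (Nat.leb 1 (Nat.div m p)) * coef (Nat.div m p) p.
Proof.
  intros HmN. destruct (primeb p) eqn:Hp.
  - pose proof (primeb_ge2 _ Hp).
    rewrite (rs_ext _ (fun n => ind (Nat.eqb (Nat.div m p) n) *
        (ind (Nat.eqb (Nat.modulo m p) 0) * ind (Nat.leb 1 (Nat.div m p)) * coef (Nat.div m p) p))).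
    + rewrite rs_single. unfold pd. rewrite Hp. simpl.
      assert (Hle : (Nat.div m p <= m)%nat) by (apply Nat.div_le_upper_bound; nia).
      destruct (Nat.ltb_spec (Nat.div m p) (S N)); [|lia]. unfold ind at 1; simpl. ring.
    + intros n _. destruct (Nat.eqb_spec (n * p) m) as [E|E].
      * subst m. rewrite Nat.Div0.mod_mul, Nat.div_mul by lia. rewrite Nat.eqb_refl. simpl. ring.
      * destruct (Nat.eqb_spec (Nat.div m p) n) as [E2|E2]; [|unfold ind; simpl; ring].
        destruct (Nat.eqb_spec (Nat.modulo m p) 0) as [E3|E3]; [|unfold ind; simpl; ring].
        exfalso. apply E. pose proof (Nat.div_mod_eq m p). subst n. lia.
  - rewrite (rs_ext _ (fun _ => 0)). rewrite rs_zero. unfold pd. rewrite Hp. unfold ind; simpl. ring.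
    intros n _. unfold coef, pd. rewrite Hp. unfold ind; simpl. ring.
Qed.

Theorem core (h : nat -> R) N K : (N < K)%nat ->
  rs (fun m => ind (Nat.leb 2 m) * h m) (S N) =
  rs (fun n => ind (Nat.leb 1 n) * rs (fun p => coef n p * ind (Nat.leb (n * p) N) * h (n * p)%nat) K) (S N).
Proof.
  intros HK. symmetry.
  rewrite (rs_ext _ (fun n => rs (fun p => rs (fun m => ind (Nat.leb 1 n) * ind (Nat.eqb (n * p) m) * coef n p * h m) (S N)) K)).
  2:{ intros n _. rewrite <- rs_scal. apply rs_ext. intros p _.
      rewrite (rs_ext _ (fun m => (ind (Nat.leb 1 n) * coef n p) * (ind (Nat.eqb (n * p) m) * h m))) by (intros; ring).
      rewrite rs_scal, (rs_single h (n*p)%nat (S N)).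
      replace (Nat.ltb (n * p) (S N)) with (Nat.leb (n * p) N).
      ring. destruct (Nat.leb_spec (n*p) N); destruct (Nat.ltb_spec (n*p) (S N)); auto; lia. }
  rewrite (rs_ext _ (fun n => rs (fun m => rs (fun p => ind (Nat.leb 1 n) * ind (Nat.eqb (n * p) m) * coef n p * h m) K) (S N)))
    by (intros; apply rs_exch).
  rewrite rs_exch. apply rs_ext. intros m Hm.
  rewrite rs_exch.
  rewrite (rs_ext _ (fun p => h m * rs (fun n => ind (Nat.leb 1 n) * ind (Nat.eqb (n * p) m) * coef n p) (S N))).
  2:{ intros p _. rewrite <- rs_scal. apply rs_ext. intros; ring. }
  rewrite rs_scal.
  rewrite (rs_ext _ (fun p => ind (pd m p) * ind (Nat.leb 1 (Nat.div m p)) * coef (Nat.div m p) p))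
    by (intros; apply inner_n; lia).
  rewrite inner_p by lia. ring.
Qed.


Lemma Ceq z w : Re z = Re w -> Im z = Im w -> z = w.
Proof. destruct z, w; simpl; intros; subst; reflexivity. Qed.

Fixpoint cs (f : nat -> Cplx) (n : nat) : Cplx :=
  match n with O => Czero | S k => Cadd (cs f k) (f k) end.

Definition N1 (z : Cplx) : R := Rabs (Re z) + Rabs (Im z).

Lemma N1_mul z w : N1 (Cmul z w) <= N1 z * N1 w.
Proof.
  unfold N1, Cmul; simpl.
  pose proof (Rabs_triang (Re z * Re w) (- (Im z * Im w))).
  pose proof (Rabs_triang (Re z * Im w) (Im z * Re w)).
  rewrite Rabs_Ropp in H. rewrite !Rabs_mult in *.
  pose proof (Rabs_pos (Re z)). pose proof (Rabs_pos (Im z)). pose proof (Rabs_pos (Re w)). pose proof (Rabs_pos (Im w)).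
  unfold Rminus. nra.
Qed.
Lemma N1_nonneg z : 0 <= N1 z.
Proof. unfold N1. pose proof (Rabs_pos (Re z)). pose proof (Rabs_pos (Im z)). lra. Qed.

Lemma Cmul_sub z w v : Cmul z (Csub w v) = Csub (Cmul z w) (Cmul z v).
Proof. apply Ceq; simpl; ring. Qed.
Lemma Cmul_add z w v : Cmul z (Cadd w v) = Cadd (Cmul z w) (Cmul z v).
Proof. apply Ceq; simpl; ring. Qed.
Lemma Cmul_zero z : Cmul z Czero = Czero.
Proof. apply Ceq; simpl; ring. Qed.
Lemma Cmul_cs z f n : Cmul z (cs f n) = cs (fun k => Cmul z (f k)) n.
Proof. induction n; simpl. apply Cmul_zero. rewrite Cmul_add, IHn. reflexivity. Qed.

Definition w (s : Cplx) (n : nat) : R := exp (- ln (INR n) * Re s).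

Lemma w_pos s n : 0 < w s n.
Proof. apply exp_pos. Qed.

Lemma N1_a s n : N1 (npow_neg n s) <= 2 * w s n.
Proof.
  unfold N1, npow_neg, Cexp, w; simpl.
  replace (- ln (INR n) * Re s - 0 * Im s) with (- ln (INR n) * Re s) by ring.
  set (e := exp _). assert (0 < e) by apply exp_pos.
  rewrite !Rabs_mult, (Rabs_right e) by lra.
  pose proof (COS_bound (- ln (INR n) * Im s + 0 * Re s)). pose proof (SIN_bound (- ln (INR n) * Im s + 0 * Re s)).
  assert (Rabs (cos (- ln (INR n) * Im s + 0 * Re s)) <= 1) by (apply Rabs_le; lra).
  assert (Rabs (sin (- ln (INR n) * Im s + 0 * Re s)) <= 1) by (apply Rabs_le; lra).
  nra.
Qed.

Lemma Cexp_add z v : Cexp (Cadd z v) = Cmul (Cexp z) (Cexp v).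
Proof. apply Ceq; simpl; rewrite exp_plus, ?cos_plus, ?sin_plus; ring. Qed.

Lemma ln_INR_mul m n : (1 <= m)%nat -> (1 <= n)%nat -> ln (INR (m * n)) = ln (INR m) + ln (INR n).
Proof. intros. rewrite mult_INR. apply ln_mult; apply lt_0_INR; lia. Qed.

Lemma a_mul s m n : (1 <= m)%nat -> (1 <= n)%nat ->
  npow_neg (m * n) s = Cmul (npow_neg m s) (npow_neg n s).
Proof.
  intros Hm Hn. unfold npow_neg. rewrite <- Cexp_add. f_equal. rewrite ln_INR_mul by auto.
  apply Ceq; simpl; ring.
Qed.

Lemma w_mul s m n : (1 <= m)%nat -> (1 <= n)%nat -> w s (m * n) = w s m * w s n.
Proof. intros. unfold w. rewrite ln_INR_mul by auto. rewrite <- exp_plus. f_equal; ring. Qed.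

Lemma a_one s : npow_neg 1 s = Cone.
Proof. unfold npow_neg, Cexp. simpl. rewrite ln_1. apply Ceq; simpl.
  replace ((-0) * Re s - 0 * Im s) with 0 by ring. replace ((-0) * Im s + 0 * Re s) with 0 by ring.
  rewrite exp_0, cos_0. ring.
  replace ((-0) * Im s + 0 * Re s) with 0 by ring. rewrite sin_0. ring.
Qed.

Record lin (phi : Cplx -> R) : Prop := {
  l_add : forall z v, phi (Cadd z v) = phi z + phi v;
  l_sub : forall z v, phi (Csub z v) = phi z - phi v;
  l_zero : phi Czero = 0;
  l_sc : forall r z, phi (Cmul (RC r) z) = r * phi z;
  l_bd : forall z, Rabs (phi z) <= N1 z }.

Lemma lin_Re : lin Re.
Proof. split; intros; simpl; try ring. unfold N1. pose proof (Rabs_pos (Im z)). lra. Qed.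
Lemma lin_Im : lin Im.
Proof. split; intros; simpl; try ring. unfold N1. pose proof (Rabs_pos (Re z)). lra. Qed.

Lemma phi_cs phi (H : lin phi) f n : phi (cs f n) = rs (fun k => phi (f k)) n.
Proof. induction n; simpl. apply (l_zero _ H). rewrite (l_add _ H), IHn. reflexivity. Qed.

Lemma phi_spd phi (H : lin phi) s n K : (1 <= n)%nat -> (n < K)%nat ->
  phi (Cmul (npow_neg n s) (sum_pdiv n s)) = rs (fun p => ind (pd n p) * phi (npow_neg (n * p) s)) K.
Proof.
  intros Hn HK. rewrite rs_filter. rewrite (filter_seq0 _ n); auto.
  2:{ intros k Hk. unfold pd. rewrite Nat.mod_small by lia. destruct (primeb k); simpl; auto. apply Nat.eqb_neq; lia. }
  unfold sum_pdiv. change (filter (pd n) (seq 1 n)) with (prime_divisors n).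
  assert (Hl : forall p, In p (prime_divisors n) -> (1 <= p)%nat).
  { intros p Hp. apply in_pdl in Hp; auto. destruct Hp as [Hp _]. apply primeb_ge2 in Hp. lia. }
  induction (prime_divisors n); simpl.
  - rewrite Cmul_zero. apply (l_zero _ H).
  - rewrite Cmul_add, (l_add _ H), IHl. rewrite a_mul; auto. apply Hl; simpl; auto.
    intros; apply Hl; simpl; auto.
Qed.


Lemma ln_le z : 0 < z -> ln z <= z - 1.
Proof. intros Hz. pose proof (exp_ineq1_le (ln z)). rewrite exp_ln in H by auto. lra. Qed.

Definition v (s : Cplx) (n : nat) : R := exp ((1 - Re s) * ln (INR n)).

Lemma tele s k : 1 < Re s -> (Re s - 1) * w s (S (S k)) <= v s (S k) - v s (S (S k)).
Proof.
  intros Hs. unfold v, w.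
  set (M := INR (S k)). set (N := INR (S (S k))).
  assert (HM : 0 < M) by (apply lt_0_INR; lia).
  assert (HN : N = M + 1) by (unfold N, M; rewrite (S_INR (S k)); ring).
  set (x := ln M). set (y := ln N).
  assert (Hxy : x - y <= - / N).
  { assert (x = y + ln (M / N)).
    { unfold x, y. rewrite <- ln_mult by (try apply Rdiv_lt_0_compat; lra). f_equal. field. lra. }
    pose proof (ln_le (M / N) ltac:(apply Rdiv_lt_0_compat; lra)).
    replace (M / N - 1) with (- / N) in H0 by (rewrite HN; field; lra). lra. }
  assert (Ey : exp y = N) by (apply exp_ln; lra).
  assert (E1 : exp ((1 - Re s) * x) = exp ((1 - Re s) * y) * exp ((Re s - 1) * (y - x))).
  { rewrite <- exp_plus. f_equal. ring. }
  assert (E2 : exp (- y * Re s) = exp ((1 - Re s) * y) * / N).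
  { rewrite <- Ey, <- exp_Ropp, <- exp_plus. f_equal. ring. }
  rewrite E1, E2.
  pose proof (exp_ineq1_le ((Re s - 1) * (y - x))).
  assert (0 < exp ((1 - Re s) * y)) by apply exp_pos.
  assert (0 < / N) by (apply Rinv_0_lt_compat; lra).
  assert ((Re s - 1) * / N <= (Re s - 1) * (y - x)) by (apply Rmult_le_compat_l; lra).
  nra.
Qed.

Definition T (s : Cplx) (n : nat) : R := rs (fun k => ind (Nat.leb 1 k) * w s k) n.

Lemma T_nonneg_terms s k : 0 <= ind (Nat.leb 1 k) * w s k.
Proof. pose proof (ind_01 (Nat.leb 1 k)). pose proof (w_pos s k). nra. Qed.

Lemma T_bound s n : 1 < Re s -> T s n <= 1 + / (Re s - 1).
Proof.
  intros Hs.
  assert (Hc : forall k, (Re s - 1) * rs (fun j => ind (Nat.leb 2 j) * w s j) (S (S k)) <= 1 - v s (S k)).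
  { induction k.
    - simpl. unfold v, ind. simpl. rewrite ln_1, Rmult_0_r, exp_0. lra.
    - pose proof (tele s k Hs). change (rs (fun j => ind (Nat.leb 2 j) * w s j) (S (S (S k))))
        with (rs (fun j => ind (Nat.leb 2 j) * w s j) (S (S k)) + ind (Nat.leb 2 (S (S k))) * w s (S (S k))).
      assert (E : ind (Nat.leb 2 (S (S k))) = 1) by reflexivity. rewrite E, Rmult_1_l, Rmult_plus_distr_l. lra. }
  assert (Hd : forall k, T s (S (S k)) = 1 + rs (fun j => ind (Nat.leb 2 j) * w s j) (S (S k))).
  { intros k. unfold T. rewrite (rs_ext _ (fun j => ind (Nat.leb 2 j) * w s j + ind (Nat.eqb 1 j) * w s j)).
    rewrite rs_plus, rs_single. unfold ind at 2; simpl. unfold w. simpl. rewrite ln_1.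
    replace (-0 * Re s) with 0 by ring. rewrite exp_0. ring.
    intros j _. destruct j as [|[|j]]; unfold ind; simpl; ring. }
  assert (T s n <= T s (S (S n))) by (apply rs_mono; [apply T_nonneg_terms|lia]).
  rewrite Hd in H. specialize (Hc n).
  assert (0 < v s (S n)) by apply exp_pos.
  assert (rs (fun j => ind (Nat.leb 2 j) * w s j) (S (S n)) <= / (Re s - 1)).
  { apply (Rmult_le_reg_l (Re s - 1)). lra. rewrite Rinv_r by lra. lra. }
  lra.
Qed.

Lemma nonneg_exists (u : nat -> R) B : (forall k, 0 <= u k) -> (forall n, rs u n <= B) ->
  exists l, Un_cv (sum_f_R0 u) l.
Proof.
  intros H0 HB. destruct (growing_cv (sum_f_R0 u)) as [l Hl].
  - intros n. simpl. specialize (H0 (S n)). lra.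
  - exists B. intros x [i ->]. rewrite sum_f_rs. apply HB.
  - exists l; auto.
Qed.

Lemma Rabs_le_inv x y : Rabs x <= y -> -y <= x <= y.
Proof. unfold Rabs; destruct (Rcase_abs x); lra. Qed.

Lemma real_exists (u g : nat -> R) B : (forall k, Rabs (u k) <= g k) -> (forall n, rs g n <= B) ->
  exists l, infinite_sum u l.
Proof.
  intros H HB.
  destruct (nonneg_exists (fun k => u k + g k) (2 * B)) as [l1 H1].
  - intros k. specialize (H k). apply Rabs_le_inv in H. lra.
  - intros n. rewrite rs_plus. assert (rs u n <= rs g n).
    { apply rs_le. intros k _. specialize (H k). apply Rabs_le_inv in H. lra. }
    specialize (HB n); lra.
  - destruct (nonneg_exists g B) as [l2 H2]; auto.
    + intros k. specialize (H k). pose proof (Rabs_pos (u k)). lra.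
    + exists (l1 - l2). pose proof (CV_minus _ _ _ _ H1 H2) as H3.
      intros eps Heps. destruct (H3 eps Heps) as [N HN]. exists N. intros n Hn.
      specialize (HN n Hn). rewrite <- minus_sum in HN.
      replace (sum_f_R0 (fun i => u i + g i - g i) n) with (sum_f_R0 u n) in HN. auto.
      apply sum_eq. intros; ring.
Qed.

Lemma Cseries_exists (f : nat -> Cplx) g B : (forall k, N1 (f k) <= g k) -> (forall n, rs g n <= B) ->
  exists l, Cseries_cv f l.
Proof.
  intros H HB.
  destruct (real_exists (fun k => Re (f k)) g B) as [a Ha]; auto.
  { intros k. pose proof (l_bd _ lin_Re (f k)). specialize (H k). simpl in *. lra. }
  destruct (real_exists (fun k => Im (f k)) g B) as [b Hb]; auto.
  { intros k. pose proof (l_bd _ lin_Im (f k)). specialize (H k). simpl in *. lra. }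
  exists (mkC a b). split; simpl; auto.
Qed.


Lemma main_expand s P m : main_term s P m =
  Cadd (Cmul (RC (r1 m)) (Cmul (npow_neg m s) P)) (Cmul (RC (r2 m)) (Cmul (npow_neg m s) (sum_pdiv m s))).
Proof.
  unfold main_term, avg_pdiv, r2, r1. destruct (omega m) as [|k]; simpl; apply Ceq; simpl; ring.
Qed.

Lemma phi_pt phi (H : lin phi) s m K : (1 <= m)%nat ->
  phi (Cmul (npow_neg m s) (cs (prime_term s) K)) = rs (fun p => ind (primeb p) * phi (npow_neg (m * p) s)) K.
Proof.
  intros Hm. rewrite Cmul_cs, (phi_cs _ H). apply rs_ext. intros p _. unfold prime_term.
  destruct (primeb p) eqn:Hp.
  - rewrite a_mul by (auto; apply primeb_ge2 in Hp; lia). unfold ind; ring.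
  - rewrite Cmul_zero, (l_zero _ H). unfold ind; ring.
Qed.

Lemma r1_bd n : 0 <= r1 n <= 1.
Proof. unfold r1. pose proof (pos_INR (omega n)). split.
  left; apply Rinv_0_lt_compat; lra. rewrite <- Rinv_1. apply Rinv_le_contravar; lra. Qed.
Lemma r2_bd n : 0 <= r2 n <= 1.
Proof. unfold r2. destruct (Nat.eqb_spec (omega n) 0). lra.
  pose proof (r1_bd n). assert (1 <= INR (omega n)) by (apply (le_INR 1); lia).
  assert (0 < / INR (omega n) <= 1). split. apply Rinv_0_lt_compat; lra. rewrite <- Rinv_1. apply Rinv_le_contravar; lra.
  nra. Qed.
Lemma coef_bd n p : 0 <= coef n p <= 2 * ind (Nat.leb 1 p).
Proof.
  unfold coef. pose proof (r1_bd n). pose proof (r2_bd n).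
  destruct (primeb p) eqn:Hp.
  - pose proof (primeb_ge2 _ Hp). destruct (Nat.leb_spec 1 p); [|lia].
    pose proof (ind_01 (pd n p)). change (ind true) with 1. nra.
  - unfold pd. rewrite Hp. rewrite Bool.andb_false_l. change (ind false) with 0. pose proof (ind_01 (Nat.leb 1 p)). lra.
Qed.

Lemma X_decomp phi (H : lin phi) s P N K : (N < K)%nat ->
  rs (fun m => ind (Nat.leb 1 m) * phi (main_term s P m)) (S N) =
  rs (fun m => ind (Nat.leb 1 m) * rs (fun p => coef m p * phi (npow_neg (m * p) s)) K) (S N) +
  rs (fun m => ind (Nat.leb 1 m) * (r1 m * phi (Cmul (npow_neg m s) (Csub P (cs (prime_term s) K))))) (S N).
Proof.
  intros HK. rewrite <- rs_plus. apply rs_ext. intros m Hm.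
  destruct m as [|m]. unfold ind; simpl; ring.
  rewrite main_expand, (l_add _ H), !(l_sc _ H), Cmul_sub, (l_sub _ H).
  rewrite (phi_spd _ H s (S m) K) by lia. rewrite (phi_pt _ H) by lia.
  unfold coef. rewrite (rs_ext (fun p => (r1 (S m) * ind (primeb p) + r2 (S m) * ind (pd (S m) p)) * phi (npow_neg (S m * p) s)) (fun p => r1 (S m) * (ind (primeb p) * phi (npow_neg (S m * p) s))
     + r2 (S m) * (ind (pd (S m) p) * phi (npow_neg (S m * p) s)))) by (intros; ring).
  rewrite rs_plus, !rs_scal. ring.
Qed.

Lemma R_bound phi (H : lin phi) s N K :
  Rabs (rs (fun m => ind (Nat.leb 1 m) * rs (fun p => coef m p * ind (Nat.ltb N (m * p)) * phi (npow_neg (m * p) s)) K) (S N))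
  <= 4 * rs (fun m => rs (fun p => ind (Nat.leb 1 m) * w s m * (ind (Nat.leb 1 p) * w s p) * ind (Nat.ltb N (m * p))) K) (S N).
Proof.
  eapply Rle_trans. apply rs_abs. rewrite <- rs_scal. apply rs_le. intros m _.
  rewrite Rabs_mult. rewrite <- rs_scal.
  eapply Rle_trans. apply Rmult_le_compat_l. apply Rabs_pos. apply rs_abs.
  rewrite <- rs_scal. apply rs_le. intros p _.
  rewrite (Rabs_right (ind (Nat.leb 1 m))) by (apply Rle_ge, ind_01).
  pose proof (coef_bd m p) as Hc. pose proof (ind_01 (Nat.ltb N (m * p))) as Hi.
  pose proof (w_pos s m). pose proof (w_pos s p).
  rewrite !Rabs_mult, (Rabs_right (coef m p)), (Rabs_right (ind (Nat.ltb _ _))) by lra.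
  assert (HA : forall m' p', m = S m' -> p = S p' -> Rabs (phi (npow_neg (m * p) s)) <= 2 * (w s m * w s p)).
  { intros m' p' -> ->. rewrite <- w_mul by lia. eapply Rle_trans. apply (l_bd _ H). apply N1_a. }
  set (A := Rabs (phi (npow_neg (m * p) s))) in *. assert (0 <= A) by apply Rabs_pos.
  set (i3 := ind (Nat.ltb N (m*p))) in *. set (c := coef m p) in *.
  destruct m as [|m'].
  { change (ind (Nat.leb 1 0)) with 0. rewrite !Rmult_0_l. lra. }
  change (ind (Nat.leb 1 (S m'))) with 1.
  destruct p as [|p'].
  { change (ind (Nat.leb 1 0)) with 0 in *. assert (c = 0) by lra. rewrite H3. nra. }
  change (ind (Nat.leb 1 (S p'))) with 1 in *.
  specialize (HA m' p' eq_refl eq_refl).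
  assert (c * i3 <= 2 * i3) by nra. assert (c * i3 * A <= 2 * i3 * A) by nra.
  assert (2 * i3 * A <= 2 * i3 * (2 * (w s (S m') * w s (S p')))) by nra. nra.
Qed.

Lemma Q_bound s N L M1 M2 : (L * L <= N)%nat ->
  rs (fun m => rs (fun p => ind (Nat.leb 1 m) * w s m * (ind (Nat.leb 1 p) * w s p) * ind (Nat.ltb N (m * p))) M2) M1
  <= rs (fun m => ind (Nat.ltb L m) * w s m) M1 * T s M2 + T s M1 * rs (fun p => ind (Nat.ltb L p) * w s p) M2.
Proof.
  intros HL. unfold T. rewrite <- !rs_mult, <- rs_plus. apply rs_le. intros m _. rewrite <- rs_plus.
  apply rs_le. intros p _. pose proof (w_pos s m) as Wm. pose proof (w_pos s p) as Wp.
  pose proof (ind_01 (Nat.ltb L m)) as I1. pose proof (ind_01 (Nat.ltb L p)) as I2.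
  pose proof (ind_01 (Nat.ltb N (m * p))) as I3.
  pose proof (ind_01 (Nat.leb 1 m)) as I4. pose proof (ind_01 (Nat.leb 1 p)) as I5.
  assert (0 <= w s m * w s p) as Wmp by nra.
  destruct (Nat.ltb_spec N (m * p)).
  2:{ change (ind false) with 0. rewrite Rmult_0_r. 
      apply Rplus_le_le_0_compat; apply Rmult_le_pos; apply Rmult_le_pos; lra. }
  change (ind true) with 1 in *. rewrite Rmult_1_r.
  destruct m as [|m']; [exfalso; lia|].
  destruct p as [|p']; [exfalso; lia|].
  change (ind (Nat.leb 1 (S m'))) with 1 in *. change (ind (Nat.leb 1 (S p'))) with 1 in *.
  destruct (Nat.ltb_spec L (S m')).
  - change (ind true) with 1.
    assert (X: 0 <= 1 * w s (S m') * (ind (Nat.ltb L (S p')) * w s (S p'))) by (apply Rmult_le_pos; [lra| apply Rmult_le_pos; lra]). lra.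
  - destruct (Nat.ltb_spec L (S p')).
    + change (ind true) with 1. change (ind false) with 0. rewrite !Rmult_0_l. lra.
    + exfalso. assert (S m' * S p' <= L * L)%nat by nia. lia.
Qed.


Lemma rs_S f n : rs f (S n) = rs f n + f n.
Proof. reflexivity. Qed.

Lemma T2 s : T s 2 = 1.
Proof. unfold T. simpl. change (ind (Nat.leb 1 0)) with 0. change (ind (Nat.leb 1 1)) with 1.
  unfold w. simpl. rewrite ln_1. replace (-0 * Re s) with 0 by ring. rewrite exp_0. ring. Qed.

Lemma W_exists s : 1 < Re s -> exists W, (forall n, T s n <= W) /\
  (forall eps, eps > 0 -> exists L, forall n, (n >= L)%nat -> W - T s n < eps) /\ 1 <= W.
Proof.
  intros Hs. destruct (growing_cv (T s)) as [W HW].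
  - intros n. unfold T. cbn [rs]. pose proof (T_nonneg_terms s n). lra.
  - exists (1 + / (Re s - 1)). intros x [i ->]. apply T_bound; auto.
  - assert (Hg : Un_growing (T s)) by (intros n; unfold T; cbn [rs]; pose proof (T_nonneg_terms s n); lra).
    exists W. split; [|split].
    + intros; apply growing_ineq; auto.
    + intros eps Heps. destruct (HW eps Heps) as [L HL]. exists L. intros n Hn. specialize (HL n Hn).
      unfold Rdist in HL. pose proof (growing_ineq _ _ Hg HW n). rewrite Rabs_left1 in HL by lra. lra.
    + rewrite <- (T2 s). apply growing_ineq; auto.
Qed.

Lemma tail_le s W L M : (forall n, T s n <= W) ->
  rs (fun k => ind (Nat.ltb L k) * w s k) M <= W - T s (S L).
Proof.
  intros HW. pose proof (HW (S L)).
  destruct (Nat.le_gt_cases M (S L)).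
  - rewrite (rs_ext _ (fun _ => 0)). rewrite rs_zero. lra.
    intros k Hk. destruct (Nat.ltb_spec L k); [lia|]. change (ind false) with 0. ring.
  - assert (forall d, rs (fun k => ind (Nat.ltb L k) * w s k) (S L + d) = T s (S L + d) - T s (S L)).
    { induction d.
      - rewrite Nat.add_0_r. rewrite (rs_ext _ (fun _ => 0)). rewrite rs_zero. ring.
        intros k Hk. destruct (Nat.ltb_spec L k); [lia|]. change (ind false) with 0. ring.
      - rewrite Nat.add_succ_r. unfold T in *. rewrite !(rs_S _ (S L + d)). rewrite IHd.
        destruct (Nat.ltb_spec L (S L + d)); [|lia]. destruct (Nat.leb_spec 1 (S L + d)); [|lia].
        change (ind true) with 1. ring. }
    replace M with (S L + (M - S L))%nat by lia. rewrite H1. pose proof (HW (S L + (M - S L))%nat). lra.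
Qed.

Lemma phi_zeta phi (H : lin phi) s n :
  sum_f_R0 (fun k => phi (zeta_term s k)) n = phi Cone + rs (fun m => ind (Nat.leb 2 m) * phi (npow_neg m s)) (S (S n)).
Proof.
  induction n.
  - simpl. unfold zeta_term. rewrite a_one. change (ind (Nat.leb 2 0)) with 0. change (ind (Nat.leb 2 1)) with 1. ring.
  - cbn [sum_f_R0]. rewrite IHn. cbn [rs]. change (ind (Nat.leb 2 (S (S n)))) with 1. unfold zeta_term. ring.
Qed.

Lemma sum_main phi s P n :
  sum_f_R0 (fun k => phi (main_term s P (S k))) n = rs (fun m => ind (Nat.leb 1 m) * phi (main_term s P m)) (S (S n)).
Proof.
  rewrite sum_f_rs, (rs_shift (fun m => ind (Nat.leb 1 m) * phi (main_term s P m))). change (ind (Nat.leb 1 0)) with 0.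
  rewrite (rs_ext (fun k => ind (Nat.leb 1 (S k)) * phi (main_term s P (S k))) (fun k => phi (main_term s P (S k)))).
  ring. intros. change (ind (Nat.leb 1 (S k))) with 1. ring.
Qed.

Lemma lt_div x e c W : 0 < W -> 0 < c -> x < e / (c * W) -> x * W < e / c.
Proof. intros HW Hc Hx. apply (Rmult_lt_compat_r W) in Hx; auto. replace (e / (c * W) * W) with (e / c) in Hx by (field; lra). auto. Qed.

Theorem comp phi (H : lin phi) s P Z (hs : 1 < Re s)
  (HZ : infinite_sum (fun k => phi (zeta_term s k)) (phi Z))
  (HP : forall eta, eta > 0 -> exists K0, forall K, (K >= K0)%nat -> N1 (Csub P (cs (prime_term s) K)) < eta) :
  infinite_sum (fun k => phi (main_term s P (S k))) (phi Z - phi Cone).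
Proof.
  intros eps Heps.
  destruct (W_exists s hs) as [W [HW1 [HW2 HW3]]].
  destruct (HW2 (eps / (24 * W))) as [L HL]. { apply Rlt_gt, Rdiv_lt_0_compat; lra. }
  destruct (HZ (eps / 3)) as [n0 Hn0]. lra.
  exists (max n0 (L * L)). intros n Hn.
  destruct (HP (eps / (12 * W))) as [K0 HK0]. { apply Rlt_gt, Rdiv_lt_0_compat; lra. }
  set (N := S n). set (K := S (max K0 N)).
  assert (HNK : (N < K)%nat) by lia.
  set (h := fun m => phi (npow_neg m s)).
  set (D := Csub P (cs (prime_term s) K)).
  assert (Hd : N1 D < eps / (12 * W)) by (apply HK0; lia).
  rewrite sum_main. fold N. rewrite (X_decomp _ H s P N K HNK). fold D.
  set (E1 := rs (fun m => ind (Nat.leb 1 m) * (r1 m * phi (Cmul (npow_neg m s) D))) (S N)).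
  set (Y := rs (fun m => ind (Nat.leb 1 m) * rs (fun p => coef m p * ind (Nat.leb (m * p) N) * h (m * p)%nat) K) (S N)).
  set (Rr := rs (fun m => ind (Nat.leb 1 m) * rs (fun p => coef m p * ind (Nat.ltb N (m * p)) * phi (npow_neg (m * p) s)) K) (S N)).
  assert (HX1 : rs (fun m => ind (Nat.leb 1 m) * rs (fun p => coef m p * phi (npow_neg (m * p) s)) K) (S N) = Y + Rr).
  { unfold Y, Rr. rewrite <- rs_plus. apply rs_ext. intros m _. rewrite <- Rmult_plus_distr_l, <- rs_plus. f_equal.
    apply rs_ext. intros p _. unfold h. destruct (Nat.leb_spec (m * p) N); destruct (Nat.ltb_spec N (m * p)); try lia;
    change (ind true) with 1; change (ind false) with 0; ring. }
  rewrite HX1.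
  assert (HY : Y = rs (fun m => ind (Nat.leb 2 m) * h m) (S N)) by (unfold Y; symmetry; apply core; auto).
  assert (Hz := phi_zeta phi H s n). fold N in Hz. unfold h in HY; cbv beta in HY. rewrite <- HY in Hz.
  specialize (Hn0 n ltac:(lia)). unfold Rdist in *. rewrite Hz in Hn0.
  assert (HE : Rabs E1 <= 2 * N1 D * W).
  { unfold E1. eapply Rle_trans. apply rs_abs.
    apply Rle_trans with (rs (fun m => (2 * N1 D) * (ind (Nat.leb 1 m) * w s m)) (S N)).
    - apply rs_le. intros m _. pose proof (r1_bd m). pose proof (ind_01 (Nat.leb 1 m)).
      rewrite !Rabs_mult, (Rabs_right (ind _)), (Rabs_right (r1 m)) by lra.
      pose proof (l_bd _ H (Cmul (npow_neg m s) D)). pose proof (N1_mul (npow_neg m s) D).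
      pose proof (N1_a s m). pose proof (N1_nonneg D). pose proof (N1_nonneg (npow_neg m s)).
      pose proof (Rabs_pos (phi (Cmul (npow_neg m s) D))).
      assert (Rabs (phi (Cmul (npow_neg m s) D)) <= 2 * w s m * N1 D) by nra.
      assert (r1 m * Rabs (phi (Cmul (npow_neg m s) D)) <= 2 * w s m * N1 D) by nra.
      nra.
    - rewrite rs_scal. fold (T s (S N)). pose proof (HW1 (S N)). pose proof (N1_nonneg D). nra. }
  assert (HR : Rabs Rr <= 8 * W * (W - T s (S L))).
  { eapply Rle_trans. apply R_bound. auto.
    pose proof (Q_bound s N L (S N) K ltac:(lia)).
    pose proof (tail_le s W L (S N) HW1). pose proof (tail_le s W L K HW1).
    pose proof (HW1 (S N)). pose proof (HW1 K). pose proof (HW1 (S L)).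
    assert (0 <= rs (fun k => ind (Nat.ltb L k) * w s k) (S N)).
    { apply rs_nonneg. intros k. pose proof (ind_01 (Nat.ltb L k)). pose proof (w_pos s k). nra. }
    assert (0 <= rs (fun k => ind (Nat.ltb L k) * w s k) K).
    { apply rs_nonneg. intros k. pose proof (ind_01 (Nat.ltb L k)). pose proof (w_pos s k). nra. }
    assert (0 <= T s (S N)) by (apply rs_nonneg, T_nonneg_terms).
    assert (0 <= T s K) by (apply rs_nonneg, T_nonneg_terms).
    nra. }
  assert (Ht : W - T s (S L) < eps / (24 * W)) by (apply HL; lia).
  assert (Ht' : (W - T s (S L)) * W < eps / 24) by (apply lt_div; lra).
  assert (Hd' : N1 D * W < eps / 12) by (apply lt_div; lra).
  replace (Y + Rr + E1 - (phi Z - phi Cone)) with (Rr + E1 + (phi Cone + Y - phi Z)) by ring.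
  eapply Rle_lt_trans. apply Rabs_triang. eapply Rle_lt_trans. apply Rplus_le_compat_r. apply Rabs_triang.
  lra.
Qed.


Lemma HP_of f P : Cseries_cv f P -> forall eta, eta > 0 -> exists K0, forall K, (K >= K0)%nat -> N1 (Csub P (cs f K)) < eta.
Proof.
  intros [HR HI] eta He.
  destruct (HR (eta / 2)) as [K1 H1]. lra. destruct (HI (eta / 2)) as [K2 H2]. lra.
  exists (S (max K1 K2)). intros K HK. destruct K as [|k]. lia.
  specialize (H1 k ltac:(lia)). specialize (H2 k ltac:(lia)). unfold Rdist in *.
  rewrite sum_f_rs, <- (phi_cs _ lin_Re) in H1. rewrite sum_f_rs, <- (phi_cs _ lin_Im) in H2.
  unfold N1, Csub. cbn [Re Im]. rewrite (Rabs_minus_sym (Re P)), (Rabs_minus_sym (Im P)). lra.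
Qed.

Theorem mainTheorem18 (s : Cplx) (hs : 1 < Re s) :
  exists P Z : Cplx,
    Cseries_cv (prime_term s) P /\
    Cseries_cv (zeta_term s) Z /\
    Cseries_cv (fun k => main_term s P (S k)) (Csub Z Cone).
Proof.
  destruct (Cseries_exists (prime_term s) (fun k => 2 * (ind (Nat.leb 1 k) * w s k)) (2 * (1 + / (Re s - 1)))) as [P HP].
  { intros k. unfold prime_term. destruct (primeb k) eqn:Hk.
    - pose proof (primeb_ge2 _ Hk). destruct (Nat.leb_spec 1 k); [|lia]. change (ind true) with 1.
      pose proof (N1_a s k). lra.
    - unfold N1, Czero, RC; cbn [Re Im]. rewrite Rabs_R0. pose proof (T_nonneg_terms s k). lra. }
  { intros n. rewrite rs_scal. pose proof (T_bound s n hs). unfold T in H. lra. }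
  destruct (Cseries_exists (zeta_term s) (fun k => 2 * w s (S k)) (2 * (1 + / (Re s - 1)))) as [Z HZ].
  { intros k. apply N1_a. }
  { intros n. rewrite rs_scal. pose proof (T_bound s (S n) hs). unfold T in H. rewrite rs_shift in H.
    rewrite (rs_ext (fun k => ind (Nat.leb 1 (S k)) * w s (S k)) (fun k => w s (S k))) in H.
    change (ind (Nat.leb 1 0)) with 0 in H. lra. intros; change (ind (Nat.leb 1 (S k))) with 1; ring. }
  exists P, Z. split; [auto|split; [auto|]].
  pose proof (HP_of _ _ HP) as HP'. destruct HZ as [HZR HZI].
  split.
  - rewrite (l_sub _ lin_Re). apply (comp Re lin_Re s P Z hs HZR HP').
  - rewrite (l_sub _ lin_Im). apply (comp Im lin_Im s P Z hs HZI HP').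
Qed.
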